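(* Let $C\subset\mathbb R^3$ be an embedded curve with nowhere vanishing curvature which lies in a plane $\Pi$, and let $T_0$ be the reflection of $\mathbb R^3$ with respect to $\Pi$. Then $T_0\circ f=\check f$ for every $f\in\mathcal D(C)$.
   Context: $C$ is oriented. A developable strip along $C$ is the germ along $C$ of a $C^\infty$ embedding $f(u,v)=f(u,0)+v\,\xi_f(u)$ with $\mathbf c_f(u)=f(u,0)$ parametrizing $C$, $\xi_f$ unit, and zero Gaussian curvature; with the Frenet frame $(\mathbf e,\mathbf n,\mathbf b)$ of $\mathbf c_f$ write $\xi_f=\cos\beta_f\,\mathbf e+\sin\beta_f(\cos\alpha_f\,\mathbf n+\sin\alpha_f\,\mathbf b)$. $\mathcal D(C)$: strips with $\mathbf c_f$ inducing the orientation of $C$ and $0<|\cos\alpha_f|<1$, normalized by $0<|\alpha_f|<\pi/2$ (first angular function), $0<\beta_f<\pi$; zero Gaussian curvature is equivalent to $\cot\beta_f=(\alpha_f'+|\mathbf c_f'|\tau_f)/(|\mathbf c_f'|\kappa_f\sin\alpha_f)$ ($\kappa_f,\tau_f$ curvature and torsion of $\mathbf c_f$). The dual $\check f$ of $f$ is the (unique germ of) developable strip with $\check f(u,0)=f(u,0)$ and first angular function $-\alpha_f$. *)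

(* Defs.v *)
From Stdlib Require Import Reals.
From Coquelicot Require Import Coquelicot.
Open Scope R_scope.

Definition V3 := (R * R * R)%type.
Definition vx (x : V3) : R := fst (fst x).
Definition vy (x : V3) : R := snd (fst x).
Definition vz (x : V3) : R := snd x.
Definition mkV (a b c : R) : V3 := (a, b, c).
Definition vadd (x y : V3) : V3 := mkV (vx x + vx y) (vy x + vy y) (vz x + vz y).
Definition vscal (k : R) (x : V3) : V3 := mkV (k * vx x) (k * vy x) (k * vz x).
Definition vsub (x y : V3) : V3 := vadd x (vscal (-1) y).
Definition dot (x y : V3) : R := vx x * vx y + vy x * vy y + vz x * vz y.
Definition cross (x y : V3) : V3 :=
  mkV (vy x * vz y - vz x * vy y) (vz x * vx y - vx x * vz y) (vx x * vy y - vy x * vx y).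
Definition vnorm (x : V3) : R := sqrt (dot x x).
Definition det3 (x y z : V3) : R := dot x (cross y z).

Definition dcurve (k : nat) (c : R -> V3) (u : R) : V3 :=
  mkV (Derive_n (fun t => vx (c t)) k u)
      (Derive_n (fun t => vy (c t)) k u)
      (Derive_n (fun t => vz (c t)) k u).

Definition smooth_on (a b : R) (g : R -> R) : Prop :=
  forall (k : nat) (x : R), a < x < b -> ex_derive_n g k x.
Definition smooth_curve_on (a b : R) (c : R -> V3) : Prop :=
  smooth_on a b (fun t => vx (c t)) /\ smooth_on a b (fun t => vy (c t)) /\
  smooth_on a b (fun t => vz (c t)).

Definition speed (c : R -> V3) (u : R) : R := vnorm (dcurve 1 c u).
Definition curvature (c : R -> V3) (u : R) : R :=
  vnorm (cross (dcurve 1 c u) (dcurve 2 c u)) / (speed c u ^ 3).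
Definition torsion (c : R -> V3) (u : R) : R :=
  det3 (dcurve 1 c u) (dcurve 2 c u) (dcurve 3 c u)
  / (vnorm (cross (dcurve 1 c u) (dcurve 2 c u)) ^ 2).
Definition frenet_e (c : R -> V3) (u : R) : V3 :=
  vscal (/ speed c u) (dcurve 1 c u).
Definition frenet_b (c : R -> V3) (u : R) : V3 :=
  vscal (/ vnorm (cross (dcurve 1 c u) (dcurve 2 c u)))
        (cross (dcurve 1 c u) (dcurve 2 c u)).
Definition frenet_n (c : R -> V3) (u : R) : V3 :=
  cross (frenet_b c u) (frenet_e c u).

Definition ruling (c : R -> V3) (al be : R -> R) (u : R) : V3 :=
  vadd (vscal (cos (be u)) (frenet_e c u))
       (vscal (sin (be u)) (vadd (vscal (cos (al u)) (frenet_n c u))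
                                 (vscal (sin (al u)) (frenet_b c u)))).

Definition strip (c : R -> V3) (xi : R -> V3) (u v : R) : V3 :=
  vadd (c u) (vscal v (xi u)).

Definition embedded_curve_nonvanishing_curvature (a b : R) (c : R -> V3) : Prop :=
  a < b /\ smooth_curve_on a b c /\
  (forall u1 u2, a < u1 < b -> a < u2 < b -> c u1 = c u2 -> u1 = u2) /\
  (forall u, a < u < b -> dcurve 1 c u <> mkV 0 0 0) /\
  (forall u, a < u < b -> curvature c u <> 0).

(** The germ along C of f is (the germ of) an embedding: f is injective on
    some neighbourhood {(u,v) | a<u<b, |v| < delta u} of C *)
Definition strip_embedding_germ (a b : R) (f : R -> R -> V3) : Prop :=
  exists delta : R -> R,
    (forall u, a < u < b -> 0 < delta u /\ continuous delta u) /\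
    (forall u1 v1 u2 v2, a < u1 < b -> a < u2 < b ->
       Rabs v1 < delta u1 -> Rabs v2 < delta u2 ->
       f u1 v1 = f u2 v2 -> u1 = u2 /\ v1 = v2).

(** f = strip c xi belongs to D(C), with angular functions alpha, beta:
    xi is given by the angular functions, 0 < |alpha| < pi/2, 0 < beta < pi,
    and zero Gaussian curvature, in the form
    cot beta = (alpha' + |c'| tau) / (|c'| kappa sin alpha). *)
Definition in_DC (a b : R) (c : R -> V3) (al be : R -> R) : Prop :=
  smooth_on a b al /\ smooth_on a b be /\
  (forall u, a < u < b ->
     0 < Rabs (al u) < PI / 2 /\ 0 < be u < PI /\
     cos (be u) / sin (be u) =
       (Derive al u + speed c u * torsion c u)
       / (speed c u * curvature c u * sin (al u))) /\
  strip_embedding_germ a b (strip c (ruling c al be)).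

(** Dual strip: same base curve, first angular function -alpha; its second
    angular function is the unique betacheck in (0,pi) with
    cot betacheck = (-alpha' + |c'| tau)/(|c'| kappa sin(-alpha)),
    i.e. betacheck = pi/2 - atan(that quantity). *)
Definition dual_beta (c : R -> V3) (al : R -> R) (u : R) : R :=
  PI / 2 - atan ((Derive (fun t => - al t) u + speed c u * torsion c u)
                 / (speed c u * curvature c u * sin (- al u))).
Definition dual_strip (c : R -> V3) (al : R -> R) : R -> R -> V3 :=
  strip c (ruling c (fun t => - al t) (dual_beta c al)).

Definition reflection (p N : V3) (x : V3) : V3 :=
  vsub x (vscal (2 * dot N (vsub x p)) N).

(* Main.v *)
Require Import Defs.
From Stdlib Require Import Reals Lra Lia.
From Coquelicot Require Import Coquelicot.
Open Scope R_scope.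

Lemma loc_int a b x : a < x < b -> locally x (fun y => a < y < b).
Proof. intros H. apply (open_and (fun y => a < y) (fun y => y < b)); [apply open_gt|apply open_lt|exact H]. Qed.

Lemma smooth_scal a b f k : smooth_on a b f -> smooth_on a b (fun y => k * f y).
Proof. intros H n x Hx. apply ex_derive_n_scal_l, H, Hx. Qed.

Lemma smooth_plus a b f g : smooth_on a b f -> smooth_on a b g -> smooth_on a b (fun y => f y + g y).
Proof. intros Hf Hg n x Hx. apply ex_derive_n_plus; eapply filter_imp; try apply (loc_int _ _ _ Hx);
  intros y Hy k _; auto. Qed.

Lemma Dn_plus a b f g n x : smooth_on a b f -> smooth_on a b g -> a < x < b ->
  Derive_n (fun y => f y + g y) n x = Derive_n f n x + Derive_n g n x.
Proof. intros Hf Hg Hx. apply Derive_n_plus; eapply filter_imp; try apply (loc_int _ _ _ Hx);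
  intros y Hy k _; auto. Qed.

Lemma perp_deriv a b c N p k u : smooth_curve_on a b c ->
  (forall u, a < u < b -> dot N (vsub (c u) p) = 0) -> a < u < b -> (1 <= k)%nat ->
  dot N (dcurve k c u) = 0.
Proof.
  intros [Hx [Hy Hz]] Hp Hu Hk.
  pose (g := fun t : R => (vx N * vx (c t) + vy N * vy (c t)) + vz N * vz (c t)).
  assert (E : Derive_n g k u = dot N (dcurve k c u)).
  { unfold g. rewrite (Dn_plus a b); [| apply smooth_plus; apply smooth_scal; auto | apply smooth_scal; auto | auto].
    rewrite (Dn_plus a b); [| apply smooth_scal; auto | apply smooth_scal; auto | auto].
    rewrite !Derive_n_scal_l. unfold dot, dcurve, vx, vy, vz, mkV; simpl. ring. }
  rewrite <- E. rewrite (Derive_n_ext_loc _ (fun _ => dot N p)).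
  - destruct k as [|k]; [lia|]. apply Derive_n_const.
  - eapply filter_imp; [|apply (loc_int _ _ _ Hu)]. intros t Ht. simpl.
    generalize (Hp t Ht). unfold g, dot, vsub, vadd, vscal, vx, vy, vz, mkV; simpl. lra.
Qed.
Lemma V3_ext x y : vx x = vx y -> vy x = vy y -> vz x = vz y -> x = y.
Proof. destruct x as [[x1 x2] x3], y as [[y1 y2] y3]; unfold vx, vy, vz; simpl; intros -> -> ->; reflexivity. Qed.

Ltac unf := unfold dot, cross, vsub, vadd, vscal, reflection, vx, vy, vz, mkV; simpl.

Lemma cross_par N x y : dot N N = 1 -> dot N x = 0 -> dot N y = 0 ->
  cross x y = vscal (dot N (cross x y)) N.
Proof.
  intros HN Hx Hy. apply V3_ext.
  - assert (E : vx (cross x y) - dot N (cross x y) * vx N = vx (cross x y) * (1 - dot N N)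
       + vy N * (vz y * dot N x - vz x * dot N y) + vz N * (vy x * dot N y - vy y * dot N x)) by (unf; ring).
    rewrite HN, Hx, Hy in E. replace (vx (vscal (dot N (cross x y)) N)) with (dot N (cross x y) * vx N) by reflexivity. lra.
  - assert (E : vy (cross x y) - dot N (cross x y) * vy N = vy (cross x y) * (1 - dot N N)
       + vz N * (vx y * dot N x - vx x * dot N y) + vx N * (vz x * dot N y - vz y * dot N x)) by (unf; ring).
    rewrite HN, Hx, Hy in E. replace (vy (vscal (dot N (cross x y)) N)) with (dot N (cross x y) * vy N) by reflexivity. lra.
  - assert (E : vz (cross x y) - dot N (cross x y) * vz N = vz (cross x y) * (1 - dot N N)
       + vx N * (vy y * dot N x - vy x * dot N y) + vy N * (vx x * dot N y - vx y * dot N x)) by (unf; ring).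
    rewrite HN, Hx, Hy in E. replace (vz (vscal (dot N (cross x y)) N)) with (dot N (cross x y) * vz N) by reflexivity. lra.
Qed.

Lemma final_alg p N c0 e n lam v ca sa cb sb : dot N N = 1 -> dot N e = 0 -> dot N n = 0 ->
  dot N (vsub c0 p) = 0 ->
  reflection p N (vadd c0 (vscal v (vadd (vscal cb e) (vscal sb (vadd (vscal ca n) (vscal sa (vscal lam N)))))))
  = vadd c0 (vscal v (vadd (vscal cb e) (vscal sb (vadd (vscal ca n) (vscal (- sa) (vscal lam N)))))).
Proof.
  intros HN He Hn Hc.
  assert (D : dot N (vsub (vadd c0 (vscal v (vadd (vscal cb e) (vscal sb (vadd (vscal ca n) (vscal sa (vscal lam N))))))) p)
     = dot N (vsub c0 p) + v*cb*dot N e + v*sb*ca*dot N n + v*sb*sa*lam*dot N N) by (unf; ring).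
  rewrite HN, He, Hn, Hc in D. unfold reflection. rewrite D.
  apply V3_ext; unf; ring.
Qed.

Lemma dot_scal N s x : dot N (vscal s x) = s * dot N x.
Proof. unf; ring. Qed.

Theorem lemma4p1 (a b : R) (c : R -> V3) (p N : V3) :
  embedded_curve_nonvanishing_curvature a b c ->
  vnorm N = 1 ->
  (forall u, a < u < b -> dot N (vsub (c u) p) = 0) ->
  forall al be : R -> R,
    in_DC a b c al be ->
    forall u v, a < u < b ->
      reflection p N (strip c (ruling c al be) u v)
      = dual_strip c al u v.
Proof.
  intros [_ [Hsm _]] HnN Hp al be [_ [_ [Hang _]]] u v Hu.
  assert (HN : dot N N = 1).
  { unfold vnorm in HnN. assert (0 <= dot N N) by (unf; nra).
    rewrite <- (sqrt_sqrt (dot N N)) by auto. rewrite HnN. ring. }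
  assert (H1 : dot N (dcurve 1 c u) = 0) by (apply (perp_deriv a b c N p); auto).
  assert (H2 : dot N (dcurve 2 c u) = 0) by (apply (perp_deriv a b c N p); auto).
  assert (H3 : dot N (dcurve 3 c u) = 0) by (apply (perp_deriv a b c N p); auto; lia).
  assert (Ht : torsion c u = 0).
  { unfold torsion, det3. rewrite (cross_par N (dcurve 2 c u) (dcurve 3 c u)) by auto.
    replace (dot (dcurve 1 c u) (vscal (dot N (cross (dcurve 2 c u) (dcurve 3 c u))) N))
      with (dot N (cross (dcurve 2 c u) (dcurve 3 c u)) * dot N (dcurve 1 c u)) by (unf; ring).
    rewrite H1. unfold Rdiv. ring. }
  assert (He : dot N (frenet_e c u) = 0).
  { unfold frenet_e. rewrite dot_scal, H1. ring. }
  assert (Hb : frenet_b c u = vscal (/ vnorm (cross (dcurve 1 c u) (dcurve 2 c u)) *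
                   dot N (cross (dcurve 1 c u) (dcurve 2 c u))) N).
  { unfold frenet_b. rewrite (cross_par N (dcurve 1 c u) (dcurve 2 c u)) at 2 by auto.
    apply V3_ext; unfold vscal, vx, vy, vz, mkV; simpl; ring. }
  set (lam := / vnorm (cross (dcurve 1 c u) (dcurve 2 c u)) *
                   dot N (cross (dcurve 1 c u) (dcurve 2 c u))) in Hb.
  assert (Hn : dot N (frenet_n c u) = 0).
  { unfold frenet_n. rewrite Hb. unf; ring. }
  destruct (Hang u Hu) as [_ [Hbe Heq]].
  assert (Hdb : dual_beta c al u = be u).
  { unfold dual_beta. rewrite Derive_opp, Ht, sin_neg.
    replace ((- Derive al u + speed c u * 0) / (speed c u * curvature c u * - sin (al u)))
      with ((Derive al u + speed c u * 0) / (speed c u * curvature c u * sin (al u))).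
    2:{ replace (speed c u * curvature c u * - sin (al u))
          with (- (speed c u * curvature c u * sin (al u))) by ring.
        unfold Rdiv. rewrite Rinv_opp. ring. }
    rewrite Ht in Heq. rewrite <- Heq.
    replace (cos (be u) / sin (be u)) with (tan (PI / 2 - be u)).
    2:{ unfold tan. rewrite sin_shift, cos_shift. reflexivity. }
    rewrite atan_tan by lra. ring. }
  unfold dual_strip, strip, ruling. cbv beta. rewrite Hdb, cos_neg, sin_neg, Hb.
  apply final_alg; auto.
Qed.
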